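(* Let $S\ge 2$, $T\ge 3$, $\mathcal S=\{1,\dots,S\}$, and let $\mathbf x,\mathbf y$ be two contingency tables on $\mathcal S^T$ lying in the same fiber of the toric homogeneous Markov chain (THMC) model, and put $z^t_{ij}=x^t_{ij}-y^t_{ij}$. Suppose that for some times $1\le t<t'\le T$ and states $s_t,s_{t+1},\dots,s_{t'}\in\mathcal S$ we have $z^{u}_{s_u s_{u+1}}>0$ for all $u=t,\dots,t'-1$ (i.e. $\mathbf x$ dominates $\mathbf y$ in the partial path $t\!:\!s_t s_{t+1}\cdots s_{t'}$). Then, by applying to $\mathbf x$ a finite sequence of crossing path swappings (each step producing again a table with nonnegative entries), one can transform $\mathbf x$ into a table $\tilde{\mathbf x}$ such that $\tilde{\mathbf x}$ contains (with positive frequency) a path $\omega=(\omega_1,\dots,\omega_T)$ with $\omega_u=s_u$ for all $u=t,\dots,t'$.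
   Context: A path is $\omega=(\omega_1,\dots,\omega_T)\in\mathcal S^T$. A contingency table is a function $\mathbf x:\mathcal S^T\to\mathbb Z_{\ge0}$ (a multiset of $N=\sum_\omega x(\omega)$ paths). For $1\le t\le T-1$ and $i,j\in\mathcal S$, $x^t_{ij}$ is the number of paths (with multiplicity) in $\mathbf x$ with $\omega_t=i,\omega_{t+1}=j$; $x^1_i$ is the number of paths with $\omega_1=i$; $x^+_{ij}=\sum_{t=1}^{T-1}x^t_{ij}$. The sufficient statistic of the THMC model is $\mathbf b(\mathbf x)=(\{x^1_i\}_{i\in\mathcal S},\{x^+_{ij}\}_{i,j\in\mathcal S})$, and the fiber of $\mathbf b$ is the set of all tables $\mathbf x$ with $\mathbf b(\mathbf x)=\mathbf b$. Crossing path swapping: if two paths $\omega=(s_1,\dots,s_T)$ and $\omega'=(s'_1,\dots,s'_T)$ satisfy $s_t=s'_t$ for some $t$, replacing them in the table by $\tilde\omega=(s_1,\dots,s_t,s'_{t+1},\dots,s'_T)$ and $\tilde\omega'=(s'_1,\dots,s'_t,s_{t+1},\dots,s_T)$; equivalently adding the move $e_{\tilde\omega}+e_{\tilde\omega'}-e_\omega-e_{\omega'}$ to a table containing $\omega$ and $\omega'$ (here $e_\omega$ is the indicator table of the single path $\omega$). *)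

(* Defs.v *)
From mathcomp Require Import all_boot all_order all_algebra.
Set Implicit Arguments. Unset Strict Implicit. Unset Printing Implicit Defensive.
Import GRing.Theory Num.Theory.

(* States: 'I_S (= {1..S} shifted to {0..S-1}); times: 'I_T, 0-based,
   i.e. paper time u corresponds to index u-1. *)
Definition spath (S T : nat) := {ffun 'I_T -> 'I_S}.

Definition table (S T : nat) := {ffun spath S T -> nat}.

Definition path_at (S T : nat) (w : spath S T) (t : nat) (s : 'I_S) : bool :=
  [exists u : 'I_T, (val u == t) && (w u == s)].

Definition trans_count (S T : nat) (x : table S T) (t : nat) (i j : 'I_S) : nat :=
  \sum_(w : spath S T) x w * (path_at w t i && path_at w t.+1 j).

Definition init_count (S T : nat) (x : table S T) (i : 'I_S) : nat :=
  \sum_(w : spath S T) x w * path_at w 0 i.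

Definition plus_count (S T : nat) (x : table S T) (i j : 'I_S) : nat :=
  \sum_(t < T.-1) trans_count x t i j.

Definition same_fiber (S T : nat) (x y : table S T) : Prop :=
  (forall i, init_count x i = init_count y i) /\
  (forall i j, plus_count x i j = plus_count y i j).

Definition swap_path (S T : nat) (w w' : spath S T) (t : 'I_T) : spath S T :=
  [ffun u : 'I_T => if (u <= t)%N then w u else w' u].

(* one crossing path swapping step: x' = x + e_{~w} + e_{~w'} - e_w - e_{w'},
   where w, w' agree at time t; x' being a table (nat-valued) encodes
   nonnegativity of the result. *)
Definition swap_step (S T : nat) (x x' : table S T) : Prop :=
  exists (w w' : spath S T) (t : 'I_T),
    w t = w' t /\
    forall v : spath S T,
      ((x' v)%:Z = (x v)%:Z + (swap_path w w' t == v)%:Z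
                   + (swap_path w' w t == v)%:Z
                   - (w == v)%:Z - (w' == v)%:Z)%R.

Inductive swap_reachable (S T : nat) : table S T -> table S T -> Prop :=
  | swap_refl x : swap_reachable x x
  | swap_trans x x' x'' : swap_step x x' -> swap_reachable x' x'' ->
                          swap_reachable x x''.

(* Main.v *)
Require Import Defs.
From mathcomp Require Import all_boot all_order all_algebra zify.
Set Implicit Arguments. Unset Strict Implicit.

Lemma path_atE S T (w : spath S T) u (h : (u < T)%N) i :
  path_at w u i = (w (Ordinal h) == i).
Proof.
rewrite /path_at; apply/existsP/idP.
  case=> u' /andP[/eqP e /eqP <-].
  by rewrite (_ : Ordinal h = u') //; apply: val_inj.
by move=> /eqP <-; exists (Ordinal h); rewrite /= !eqxx.
Qed.

Lemma path_at_lt S T (w : spath S T) u i : path_at w u i -> (u < T)%N.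
Proof. by rewrite /path_at => /existsP [u' /andP[/eqP <- _]]; exact: ltn_ord. Qed.

Lemma sum_pick S T (a : spath S T) (F : spath S T -> nat) :
  \sum_w (a == w) * F w = F a.
Proof.
rewrite (bigD1 a) //= eqxx mul1n big1 ?addn0 // => w /negbTE.
by rewrite eq_sym => ->.
Qed.

Lemma step_tc S T (x x' : table S T) : swap_step x x' ->
  forall v i j, trans_count x' v i j = trans_count x v i j.
Proof.
case=> w1 [w2 [t [e H]]] v i j.
set sw1 := swap_path w1 w2 t; set sw2 := swap_path w2 w1 t.
pose c (w : spath S T) : nat := path_at w v i && path_at w v.+1 j.
have E w : x' w + (w1 == w) + (w2 == w) = x w + (sw1 == w) + (sw2 == w).
  move: (H w); case: (w1 == w); case: (w2 == w); case: (sw1 == w);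
  case: (sw2 == w) => /=; lia.
have Pu (w w' : spath S T) u k : (u <= t)%N -> path_at (swap_path w w' t) u k = path_at w u k.
  move=> hu; apply/idP/idP => h; have hT := path_at_lt h;
  move: h; rewrite !(path_atE _ hT) /swap_path ffunE /= hu //.
have Pd (w w' : spath S T) u k : (t <= u)%N -> w t = w' t ->
   path_at (swap_path w w' t) u k = path_at w' u k.
  move=> hu ew; apply/idP/idP => h; have hT := path_at_lt h;
  move: h; rewrite !(path_atE _ hT) /swap_path ffunE /=;
  case: (leqP u t) => // hut; have -> : Ordinal hT = t by apply: val_inj => /=; lia.
    by rewrite ew.
  by rewrite ew.
have C : c sw1 + c sw2 = c w1 + c w2.
  rewrite /c; case: (leqP v.+1 t) => hv.
    by rewrite !Pu // ltnW.
  rewrite !Pd // ?(ltnW hv) //.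
  by rewrite addnC.
apply/eqP; rewrite -(eqn_add2r (c w1 + c w2)) -{2}C; apply/eqP.
rewrite /trans_count -(sum_pick w1 c) -(sum_pick w2 c) -(sum_pick sw1 c) -(sum_pick sw2 c).
rewrite !addnA -!big_split /=; apply: eq_bigr => w _.
by rewrite -!mulnDl E.
Qed.

Lemma reach_tc S T (x x' : table S T) : swap_reachable x x' ->
  forall v i j, trans_count x' v i j = trans_count x v i j.
Proof.
elim=> // a b c hab _ IH v i j; by rewrite IH (step_tc hab).
Qed.

Lemma reach_trans S T (a b c : table S T) :
  swap_reachable a b -> swap_reachable b c -> swap_reachable a c.
Proof.
elim=> // a1 a2 a3 h _ IH hc; apply: swap_trans h (IH hc).
Qed.

Lemma tc_pos S T (x : table S T) v i j : (0 < trans_count x v i j)%N ->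
  exists w, (0 < x w)%N /\ path_at w v i /\ path_at w v.+1 j.
Proof.
rewrite /trans_count.
case: (pickP (fun w => 0 < x w * (path_at w v i && path_at w v.+1 j))%N) => [w|H].
  by rewrite muln_gt0 lt0b => /andP[a /andP[b c]] _; exists w.
rewrite big1 // => w _; move: (H w) => /negbT; rewrite lt0n negbK => /eqP.
by [].
Qed.

Lemma do_swap S T (x : table S T) (w w' : spath S T) (t : 'I_T) :
  w t = w' t -> w != w' -> (0 < x w)%N -> (0 < x w')%N ->
  exists x', swap_step x x' /\ (0 < x' (swap_path w w' t))%N.
Proof.
move=> e ne hw hw'.
set sw1 := swap_path w w' t; set sw2 := swap_path w' w t.
exists [ffun v => ((x v + (sw1 == v) + (sw2 == v)) - (w == v)) - (w' == v)]%N.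
have F v : [/\ (w == v) && (w' == v) = false, (w == v) -> (0 < x v)%N
    & (w' == v) -> (0 < x v)%N].
  split; first by apply/negbTE; apply: contra ne => /andP[/eqP -> /eqP ->].
    by move/eqP <-.
  by move/eqP <-.
split.
  exists w, w', t; split => // v; rewrite ffunE.
  case: (F v); case: (w == v); case: (w' == v);
  case: (sw1 == _); case: (sw2 == _) => /=; lia.
rewrite ffunE eqxx.
case: (F sw1); case: (w == sw1); case: (w' == sw1);
case: (sw2 == _) => /=; lia.
Qed.

Theorem lemma2 (S T : nat) (hS : (2 <= S)%N) (hT : (3 <= T)%N)
  (x y : table S T) (hxy : same_fiber x y)
  (t t' : nat) (htt' : (t < t')%N) (ht' : (t' < T)%N) (s : nat -> 'I_S)
  (hdom : forall u : nat, (t <= u < t')%N ->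
            (trans_count y u (s u) (s u.+1) < trans_count x u (s u) (s u.+1))%N) :
  exists xt : table S T, swap_reachable x xt /\
    exists w : spath S T, (0 < xt w)%N /\
      forall u : nat, (t <= u <= t')%N -> path_at w u (s u).
Proof.
have hpos u : (t <= u < t')%N -> (0 < trans_count x u (s u) (s u.+1))%N.
  by move=> hu; move: (hdom u hu); lia.
suff key k : (t + k.+1 <= t')%N -> exists xt : table S T, swap_reachable x xt /\
    exists w : spath S T, (0 < xt w)%N /\
      forall u : nat, (t <= u <= t + k.+1)%N -> path_at w u (s u).
  have := key (t' - t).-1; rewrite prednK ?subn_gt0 // subnKC ?(ltnW htt') //.
  by apply.
elim: k => [|k IH] hk.
  have [w [hw [p1 p2]]] := tc_pos (hpos t ltac:(lia)).
  exists x; split; first exact: swap_refl.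
  exists w; split => // u hu.
  have [->|->] : u = t \/ u = t.+1 by lia.
    by [].
  by [].
have [xt [hr [w [hw hp]]]] := IH ltac:(lia).
set n := (t + k.+1)%N.
have hn : (t <= n < t')%N by rewrite /n; lia.
have := hpos n hn; rewrite -(reach_tc hr) => /tc_pos [w' [hw' [p1 p2]]].
have hnT : (n < T)%N by lia.
case: (eqVneq w w') => [ew|ne].
  exists xt; split => //; exists w; split => // u hu.
  case: (leqP u n) => hun; first by apply: hp; rewrite /n in hun *; lia.
  have -> : u = n.+1 by rewrite /n in hun *; lia.
  by rewrite ew.
have e : w (Ordinal hnT) = w' (Ordinal hnT).
  move: (hp n ltac:(rewrite /n; lia)) p1; rewrite !(path_atE _ hnT).
  by move=> /eqP -> /eqP ->.
have [x' [hs hx']] := do_swap e ne hw hw'.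
exists x'; split; first by apply: reach_trans hr (swap_trans hs (swap_refl _)).
exists (swap_path w w' (Ordinal hnT)); split => // u hu.
have huT : (u < T)%N by rewrite /n in hu *; lia.
rewrite (path_atE _ huT) /swap_path ffunE /=.
case: (leqP u n) => hun.
  by rewrite -(path_atE _ huT); apply: hp; rewrite /n in hun *; lia.
have eu : u = n.+1 by rewrite /n in hun *; lia.
by move: p2; subst u; rewrite (path_atE _ huT).
Qed.
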